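(* Let $n\ge 2$. There is no finite subset $Y\subseteq\mathbb{S}^{n-1}$ which is a spherical design of harmonic index $\{8,4\}$ and has \[|Y|=\frac{(n+1)(n+2)(n+5)(n+6)}{252},\] i.e. there exists no tight spherical design of harmonic index $\{8,4\}$ on $\mathbb{S}^{n-1}$.
   Context: $\mathbb{S}^{n-1}$ is the unit sphere in $\mathbb{R}^n$. For $T\subseteq\mathbb{N}$, a finite $Y\subseteq\mathbb{S}^{n-1}$ is a spherical design of harmonic index $T$ if $\sum_{\mathbf{x}\in Y}f(\mathbf{x})=0$ for every real homogeneous harmonic polynomial $f$ in $n$ variables whose degree lies in $T$. With $Q_{n,k}$ the Gegenbauer polynomials (orthogonal on $[-1,1]$ for the weight $(1-x^2)^{(n-3)/2}$, $Q_{n,k}(1)=\binom{n+k-1}{n-1}-\binom{n+k-3}{n-1}$), the polynomial $L(x)=Q_{n,8}(x)+f_4Q_{n,4}(x)$ with $f_4=\frac{(n+4)(n+5)(n+14)}{60(n+12)}$ has the form $a(x^2-\alpha^2)^2(x^2-\beta^2)^2-c_{n,T}$ with $a>0$, $\alpha^2,\beta^2=\frac{7(n+8)\pm2\sqrt{7(n+5)(n+8)}}{(n+8)(n+12)}$, and $c_{n,T}=\frac{n(n+1)(n+4)(n+5)(n+10)(n+14)}{160(n+8)(n+12)}$; it yields the lower bound $|Y|\ge b_{n,T}=\frac{(n+1)(n+2)(n+5)(n+6)}{252}$ for designs of harmonic index $\{8,4\}$, and a design attaining it is called tight. *)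

(* Defs.v *)
From HB Require Import structures.
From mathcomp Require Import all_boot all_order all_algebra.
From mathcomp Require Import reals.
From mathcomp Require Import mpoly.
Set Implicit Arguments. Unset Strict Implicit. Unset Printing Implicit Defensive.
Import Order.TTheory GRing.Theory Num.Theory.
Local Open Scope ring_scope.

(* Points of R^n are row vectors 'rV[R]_n; a polynomial in n variables is
   evaluated at x via the coordinate function (fun i => x ord0 i). *)

Definition on_sphere (R : realType) (n : nat) (x : 'rV[R]_n) : bool :=
  \sum_(i < n) x ord0 i ^+ 2 == 1.

Definition laplacian (R : realType) (n : nat) (p : {mpoly R[n]}) : {mpoly R[n]} :=
  \sum_(i < n) mderiv i (mderiv i p).

Definition harmonic_homog (R : realType) (n k : nat) (p : {mpoly R[n]}) : Prop :=
  p \is k.-homog /\ laplacian p = 0.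

Definition harmonic_index_design (R : realType) (n : nat) (T : pred nat)
    (Y : seq 'rV[R]_n) : Prop :=
  uniq Y /\ all (@on_sphere R n) Y /\
  forall (k : nat) (f : {mpoly R[n]}), T k -> harmonic_homog k f ->
    \sum_(x <- Y) f.@[fun i => x ord0 i] = 0.

(* Main.v *)
Require Import Defs.
From Stdlib Require Import ZArith Lia Znumtheory.
From HB Require Import structures.
From mathcomp Require Import all_boot all_order all_algebra.
From mathcomp Require Import reals.
From mathcomp Require Import mpoly.
From mathcomp Require Import ring lra zify.
Import Order.TTheory GRing.Theory Num.Theory.

Module NT.
Local Open Scope Z_scope.
Definition Pz (d : Z) : Z :=
  (d+3)*(d+4)*(d+7)*(d+8)*(d+1)*(19*d^3+197*d^2+504*d+1764).

Definition checkd (d : Z) : bool :=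
  let W := 7*d*d+119*d+490 in
  let r := Z.sqrt W in
  negb ((r * r =? W) && ((r * Pz d) mod (3556224*d) =? 0)).

Definition Cst : Z := 580849920.

Definition test (x : Z) : bool :=
  if Cst mod x =? 0 then checkd x && checkd (Cst / x) else true.

Fixpoint loop (k : nat) (z : Z) : bool :=
  match k with O => true | S k' => test z && loop k' (z - 1) end.

Lemma loop_ok : loop (Z.to_nat 24101) 24101 = true.
Proof. vm_compute. reflexivity. Qed.

Lemma loop_spec k : forall z, loop k z = true ->
  forall x, z - Z.of_nat k < x <= z -> test x = true.
Proof.
induction k as [|k IH]; intros z H x Hx; simpl in *.
- lia.
- apply andb_prop in H as [H1 H2].
  destruct (Z.eq_dec x z) as [->|ne]; [exact H1|].
  apply (IH (z-1) H2); lia.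
Qed.

Lemma test_ok x : 0 < x <= 24101 -> test x = true.
Proof. intro Hx. apply (loop_spec _ _ loop_ok). rewrite Z2Nat.id; lia. Qed.

Lemma Pz_expand d : Pz d = 1185408 + d * (2533104 + 2073540*d + 977296*d^2
   + 309253*d^3 + 65926*d^4 + 8740*d^5 + 634*d^6 + 19*d^7).
Proof. unfold Pz; ring. Qed.

Lemma NTz d m k : 0 < d -> 0 <= m -> m * m = 7*(d+7)*(d+10) ->
  3556224*d*k = m * Pz d -> False.
Proof.
intros Hd Hm HW HX.
set (w := 2533104 + 2073540*d + 977296*d^2
   + 309253*d^3 + 65926*d^4 + 8740*d^5 + 634*d^6 + 19*d^7) in *.
assert (H1 : (d | 1185408 * m)).
{ exists (3556224*k - m * w). rewrite Pz_expand in HX. fold w in HX. nia. }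
assert (H2 : (d | 1185408 * d)) by (exists 1185408; ring).
assert (H3 : (d | 1185408 * Z.gcd m d)).
{ replace (1185408 * Z.gcd m d) with (Z.gcd (1185408 * m) (1185408*d)).
  - apply Z.gcd_greatest; assumption.
  - rewrite Z.gcd_mul_mono_l. reflexivity. }
assert (H4 : (Z.gcd m d | 490)).
{ replace 490 with (m * m - d*(7*(d+17))) by nia.
  apply Z.divide_sub_r.
  - apply Z.divide_mul_l. apply Z.gcd_divide_l.
  - apply Z.divide_mul_l. apply Z.gcd_divide_r. }
assert (H5 : (d | Cst)).
{ unfold Cst. replace 580849920 with (1185408 * 490) by reflexivity.
  eapply Z.divide_trans; [exact H3|]. apply Z.mul_divide_mono_l. exact H4. }
assert (Hc : checkd d = true).
{ destruct (Z.le_gt_cases d 24101) as [Hle|Hgt].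
  - pose proof (test_ok d (conj Hd Hle)) as T. unfold test in T.
    rewrite (proj2 (Z.eqb_eq _ _) (proj2 (Z.mod_divide Cst d ltac:(lia)) H5)) in T.
    apply andb_prop in T. tauto.
  - destruct H5 as [e He].
    unfold Cst in He.
    assert (He0 : 0 < e).
    { destruct (Z.le_gt_cases e 0) as [h|h]; [|lia].
      assert (e * d <= 0) by (apply Z.mul_nonpos_nonneg; lia). lia. }
    assert (He1 : 0 < e <= 24101).
    { split; [lia|]. destruct (Z.le_gt_cases e 24101) as [h|h]; [lia|].
      assert (24102 * 24102 <= e * d) by (apply Z.mul_le_mono_nonneg; lia). lia. }
    fold Cst in He.
    pose proof (test_ok e He1) as T. unfold test in T.
    assert (Hm0 : Cst mod e = 0) by (rewrite He Z.mul_comm; apply Z.mod_mul; lia).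
    rewrite (proj2 (Z.eqb_eq _ _) Hm0) in T.
    apply andb_prop in T as [_ T].
    replace (Cst / e) with d in T; [exact T|].
    rewrite He Z.mul_comm. rewrite Z.div_mul; lia. }
unfold checkd in Hc.
replace (7*d*d+119*d+490) with (m * m) in Hc by nia.
have Hs : Z.sqrt (m * m) = m by apply Z.sqrt_square; lia.
rewrite Hs in Hc.
rewrite Z.eqb_refl in Hc.
replace (m * Pz d) with (k * (3556224*d)) in Hc by nia.
rewrite Z_mod_mult in Hc. simpl in Hc. discriminate.
Qed.

End NT.

Local Open Scope ring_scope.
Set Implicit Arguments. Unset Strict Implicit. Unset Printing Implicit Defensive.

Section Zonal.
Variables (R : realType) (n : nat).
Local Notation P := {mpoly R[n]}.

Lemma mderiv_exp i (p : P) a : mderiv i (p ^+ a) = (p ^+ a.-1 * mderiv i p) *+ a.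
Proof.
elim: a => [|a IH]; first by rewrite expr0 -mpolyC1 mderivC mulr0n.
rewrite exprS mderivM IH; case: a IH => [|a] IH.
  by rewrite expr0 !mulr1 mulr0n mulr0 addr0 mul1r.
rewrite /= !exprS; ring.
Qed.

Lemma lapM (p q : P) : laplacian (p * q) =
  laplacian p * q + p * laplacian q + (\sum_(i < n) mderiv i p * mderiv i q) *+ 2.
Proof.
rewrite /laplacian.
have -> : \sum_(i < n) mderiv i (mderiv i (p * q)) =
  \sum_(i < n) (mderiv i (mderiv i p) * q + p * mderiv i (mderiv i q)
     + (mderiv i p * mderiv i q) *+ 2).
  apply: eq_bigr => i _; rewrite !mderivM mderivD !mderivM; ring.
by rewrite !big_split /= -mulr_suml -mulr_sumr mulr2n.
Qed.

Lemma lapD (p q : P) : laplacian (p + q) = laplacian p + laplacian q.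
Proof. by rewrite /laplacian -big_split; apply: eq_bigr => i _; rewrite !mderivD. Qed.

Lemma lapZ c (p : P) : laplacian (c *: p) = c *: laplacian p.
Proof. by rewrite /laplacian scaler_sumr; apply: eq_bigr => i _; rewrite !mderivZ. Qed.

Lemma mderivXi i j : mderiv i ('X_j : P) = ((i == j)%:R)%:MP.
Proof.
rewrite mderivX mnm1E; case: (eqVneq j i) => [->|ne].
  have -> : (U_(i) - U_(i))%MM = 0%MM by apply/mnmP=> k; rewrite !mnmE subnn.
  by rewrite mpolyX0 /= -mul_mpolyC mulr1.
by rewrite /= scale0r mpolyC0.
Qed.

Variable v : 'I_n -> R.
Hypothesis hv : \sum_i v i ^+ 2 = 1.

Definition Up : P := \sum_(i < n) v i *: 'X_i.
Definition Sp : P := \sum_(i < n) 'X_i ^+ 2.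

Lemma dUp i : mderiv i Up = (v i)%:MP.
Proof.
rewrite /Up raddf_sum /=.
rewrite (bigD1 i) //= big1 ?addr0; last first.
  by move=> j ne; rewrite mderivZ mderivXi eq_sym (negbTE ne) mpolyC0 scaler0.
by rewrite mderivZ mderivXi eqxx -mul_mpolyC mulr1.
Qed.

Lemma dSp i : mderiv i Sp = 'X_i *+ 2.
Proof.
rewrite /Sp raddf_sum /=.
rewrite (bigD1 i) //= big1 ?addr0; last first.
  by move=> j ne; rewrite mderiv_exp mderivXi eq_sym (negbTE ne) mpolyC0 mulr0 mul0rn.
by rewrite mderiv_exp mderivXi eqxx mpolyC1 mulr1 expr1.
Qed.


Lemma lapU a : laplacian (Up ^+ a) = Up ^+ a.-2 *+ (a.-1 * a).
Proof.
rewrite /laplacian.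
transitivity (\sum_(i < n) (Up ^+ a.-2 *+ (a.-1 * a)) * (v i ^+ 2)%:MP).
  apply: eq_bigr => i _; rewrite !mderiv_exp dUp mderivMn mderivM mderivC mulr0 addr0.
  rewrite mderiv_exp dUp rmorphXn /=. case: a => [|[|a]] /=; rewrite ?mulr0n ?mul0rn ?mul0n //; ring.
by rewrite -mulr_sumr -rmorph_sum hv /= mulr1.
Qed.

Lemma sumX2 : \sum_(i < n) 'X_i * 'X_i = Sp :> P.
Proof. by apply: eq_bigr => i _; rewrite expr2. Qed.

Lemma lapS b : laplacian (Sp ^+ b) = Sp ^+ b.-1 *+ (4 * b.-1 * b + 2 * n * b).
Proof.
rewrite /laplacian.
transitivity (\sum_(i < n) ((Sp ^+ b.-2 * ('X_i * 'X_i)) *+ (4 * b.-1 * b) + Sp ^+ b.-1 *+ (2 * b))).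
  apply: eq_bigr => i _; rewrite !mderiv_exp dSp mderivMn mderivM mderivMn mderivXi eqxx mpolyC1.
  rewrite mderiv_exp dSp. case: b => [|[|b]] /=; rewrite ?mulr0n ?mul0rn ?mul0n ?muln0 //=; ring.
rewrite big_split /= !sumrMnl -mulr_sumr sumX2 sumr_const card_ord -mulrnA.
case: b => [|[|b]] /=.
- by rewrite !muln0 !mulr0n addr0.
- ring.
- by rewrite -exprSr -mulrnDr; congr (_ *+ _); ring.
Qed.

Lemma sumvX : \sum_(i < n) (v i)%:MP * 'X_i = Up :> P.
Proof. by apply: eq_bigr => i _; rewrite mul_mpolyC. Qed.

Lemma crossUS a b : \sum_(i < n) mderiv i (Up ^+ a) * mderiv i (Sp ^+ b) =
   Up ^+ a * Sp ^+ b.-1 *+ (2 * a * b).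
Proof.
transitivity (\sum_(i < n) (Up ^+ a.-1 * Sp ^+ b.-1 *+ (2 * a * b)) * ((v i)%:MP * 'X_i)).
  apply: eq_bigr => i _; rewrite !mderiv_exp dUp dSp; ring.
rewrite -mulr_sumr sumvX; case: a => [|a] /=; rewrite ?mul0n ?muln0 ?mulr0n ?mul0r //.
by rewrite mulrnAl -mulrA (mulrC (Sp ^+ _)) mulrA -exprSr.
Qed.

Lemma lapUS a b : laplacian (Up ^+ a * Sp ^+ b) =
  Up ^+ a.-2 * Sp ^+ b *+ (a.-1 * a) +
  Up ^+ a * Sp ^+ b.-1 *+ (4 * b.-1 * b + 2 * n * b + 4 * a * b).
Proof.
rewrite lapM lapU lapS crossUS; ring.
Qed.


Let nR : R := n%:R.
Definition c80 : R := 105 / ((nR + 6) * (nR + 8) * (nR + 10) * (nR + 12)).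
Definition c81 : R := - 420 / ((nR + 8) * (nR + 10) * (nR + 12)).
Definition c82 : R := 210 / ((nR + 10) * (nR + 12)).
Definition c83 : R := - 28 / (nR + 12).
Definition c40 : R := 3 / ((nR + 2) * (nR + 4)).
Definition c41 : R := - 6 / (nR + 4).

Definition Z8 : P := c80 *: (Up ^+ 0 * Sp ^+ 4) + c81 *: (Up ^+ 2 * Sp ^+ 3)
  + c82 *: (Up ^+ 4 * Sp ^+ 2) + c83 *: (Up ^+ 6 * Sp ^+ 1) + Up ^+ 8 * Sp ^+ 0.
Definition Z4 : P := c40 *: (Up ^+ 0 * Sp ^+ 2) + c41 *: (Up ^+ 2 * Sp ^+ 1)
  + Up ^+ 4 * Sp ^+ 0.

Lemma nR_ge0 : 0 <= nR. Proof. by rewrite /nR ler0n. Qed.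

Lemma lapZ4 : laplacian Z4 = 0.
Proof.
rewrite /Z4 !lapD !lapZ !lapUS /= -!mul_mpolyC.
apply: (@etrans _ _ ((c40 * (8 + 4 * nR) + c41 * 2)%:MP * Sp
   + (c41 * (8 + 2 * nR) + 12)%:MP * Up ^+ 2)).
  rewrite /nR; ring.
have -> : c40 * (8 + 4 * nR) + c41 * 2 = 0.
  rewrite /c40 /c41; field; have := nR_ge0; lra.
have -> : c41 * (8 + 2 * nR) + 12 = 0.
  rewrite /c41; field; have := nR_ge0; lra.
by rewrite !mpolyC0 !mul0r addr0.
Qed.


Lemma lapZ8 : laplacian Z8 = 0.
Proof.
rewrite /Z8 !lapD !lapZ !lapUS /= -!mul_mpolyC.
apply: (@etrans _ _ ((c80 * (48 + 8 * nR) + c81 * 2)%:MP * Sp ^+ 3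
   + (c81 * (48 + 6 * nR) + c82 * 12)%:MP * (Up ^+ 2 * Sp ^+ 2)
   + (c82 * (40 + 4 * nR) + c83 * 30)%:MP * (Up ^+ 4 * Sp)
   + (c83 * (24 + 2 * nR) + 56)%:MP * Up ^+ 6)).
  rewrite /nR; ring.
have -> : c80 * (48 + 8 * nR) + c81 * 2 = 0.
  rewrite /c80 /c81; field; have := nR_ge0; lra.
have -> : c81 * (48 + 6 * nR) + c82 * 12 = 0.
  rewrite /c81 /c82; field; have := nR_ge0; lra.
have -> : c82 * (40 + 4 * nR) + c83 * 30 = 0.
  rewrite /c82 /c83; field; have := nR_ge0; lra.
have -> : c83 * (24 + 2 * nR) + 56 = 0.
  rewrite /c83; field; have := nR_ge0; lra.
by rewrite !mpolyC0 !mul0r !addr0.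
Qed.


Lemma homX i : ('X_i : P) \is 1.-homog.
Proof. by rewrite dhomogX /= mdeg1. Qed.

Lemma homU : Up \is 1.-homog.
Proof. by apply: rpred_sum => i _; apply: rpredZ; apply: homX. Qed.

Lemma homS : Sp \is 2.-homog.
Proof. by apply: rpred_sum => i _; apply: (dhomogMn 2 (homX i)). Qed.

Lemma homUS a b : Up ^+ a * Sp ^+ b \is (1 * a + 2 * b)%N.-homog.
Proof. exact: dhomogM (dhomogMn a homU) (dhomogMn b homS). Qed.

Lemma homZ8 : Z8 \is 8.-homog.
Proof.
by rewrite /Z8; repeat apply: rpredD; try apply: rpredZ; apply: (homUS _ _).
Qed.

Lemma homZ4 : Z4 \is 4.-homog.
Proof.
by rewrite /Z4; repeat apply: rpredD; try apply: rpredZ; apply: (homUS _ _).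
Qed.

Variable x : 'I_n -> R.
Hypothesis hx : \sum_i x i ^+ 2 = 1.
Let t : R := \sum_i v i * x i.

Lemma evU : Up.@[x] = t.
Proof.
rewrite /Up raddf_sum; apply: eq_bigr => i _.
by rewrite /= mevalZ mevalXU.
Qed.


Lemma evS : Sp.@[x] = 1.
Proof.
rewrite /Sp raddf_sum -hx; apply: eq_bigr => i _.
by rewrite /= rmorphXn /= mevalXU.
Qed.

Lemma evUS a b : (Up ^+ a * Sp ^+ b).@[x] = t ^+ a.
Proof. by rewrite mevalM !rmorphXn /= evU evS expr1n mulr1. Qed.

Lemma evZ8 : Z8.@[x] = c80 + c81 * t ^+ 2 + c82 * t ^+ 4 + c83 * t ^+ 6 + t ^+ 8.
Proof. by rewrite /Z8 !mevalD !mevalZ !evUS expr0 mulr1. Qed.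

Lemma evZ4 : Z4.@[x] = c40 + c41 * t ^+ 2 + t ^+ 4.
Proof. by rewrite /Z4 !mevalD !mevalZ !evUS expr0 mulr1. Qed.

End Zonal.

Section Main.
Variables (R : realType) (n : nat) (Y : seq 'rV[R]_n).
Hypothesis uY : uniq Y.
Hypothesis sY : all (@on_sphere R n) Y.
Hypothesis hD : forall (k : nat) (f : {mpoly R[n]}), (pred2 8%N 4%N) k -> harmonic_homog k f ->
    \sum_(x <- Y) f.@[fun i => x ord0 i] = 0.

Definition ip (y x : 'rV[R]_n) : R := \sum_i y ord0 i * x ord0 i.
Definition z8 (t : R) : R := c80 R n + c81 R n * t ^+ 2 + c82 R n * t ^+ 4 + c83 R n * t ^+ 6 + t ^+ 8.
Definition z4 (t : R) : R := c40 R n + c41 R n * t ^+ 2 + t ^+ 4.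

Lemma sph x : x \in Y -> \sum_i x ord0 i ^+ 2 = 1.
Proof. by move=> xY; apply/eqP; exact: (allP sY x xY). Qed.

Lemma sum8 y : y \in Y -> \sum_(x <- Y) z8 (ip y x) = 0.
Proof.
move=> yY; have hv := sph yY.
apply: (etrans _ (hD (k := 8%N) (f := Z8 (fun i => y ord0 i)) erefl (conj (homZ8 _) (lapZ8 hv)))).
apply: eq_big_seq => x xY; by rewrite (evZ8 _ (sph xY)).
Qed.

Lemma sum4 y : y \in Y -> \sum_(x <- Y) z4 (ip y x) = 0.
Proof.
move=> yY; have hv := sph yY.
apply: (etrans _ (hD (k := 4%N) (f := Z4 (fun i => y ord0 i)) erefl (conj (homZ4 _) (lapZ4 hv)))).
apply: eq_big_seq => x xY; by rewrite (evZ4 _ (sph xY)).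
Qed.

Lemma ip_diag y : y \in Y -> ip y y = 1.
Proof. by move=> yY; rewrite /ip -(sph yY); apply: eq_bigr => i _; rewrite expr2. Qed.

End Main.

Section Main2.
Variables (R : realType) (n : nat) (Y : seq 'rV[R]_n).
Hypothesis uY : uniq Y.
Hypothesis sY : all (@on_sphere R n) Y.
Hypothesis hD : forall (k : nat) (f : {mpoly R[n]}), (pred2 8%N 4%N) k -> harmonic_homog k f ->
    \sum_(x <- Y) f.@[fun i => x ord0 i] = 0.
Hypothesis hn : (3 <= n)%N.
Let nR : R := n%:R.
Let b : R := (size Y)%:R.
Hypothesis hb : b = (nR + 1) * (nR + 2) * (nR + 5) * (nR + 6) / 252.

Lemma nR3 : 3 <= nR.
Proof. by rewrite /nR (ler_nat R 3 n). Qed.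

Definition e1 : R := 14 / (nR + 12).
Definition e2 : R := 21 / ((nR + 8) * (nR + 12)).
Definition pp (s : R) : R := s ^+ 2 - e1 * s + e2.
Definition fC : R := e1 ^+ 2 + 2 * e2 - c82 R n.
Definition cP : R := e2 ^+ 2 - c80 R n - fC * c40 R n.

Lemma key_id t : z8 n t + fC * z4 n t = (pp (t ^+ 2)) ^+ 2 - cP.
Proof.
rewrite /z8 /z4 /pp /cP /fC /e1 /e2 /c80 /c81 /c82 /c83 /c40 /c41 -/nR.
have := nR3; move=> h3; field; lra.
Qed.

Lemma tight : (pp 1) ^+ 2 = cP * b.
Proof.
rewrite hb /pp /cP /fC /e1 /e2 /c80 /c81 /c82 /c83 /c40 /c41 -/nR.
have := nR3; move=> h3; field; lra.
Qed.


Lemma sumcst (T : Type) (r : seq T) (c : R) : \sum_(x <- r) c = c * (size r)%:R.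
Proof.
elim: r => [|a r IH]; first by rewrite big_nil mulr0.
by rewrite big_cons IH /= -addn1 natrD; ring.
Qed.

Lemma sumpp y : y \in Y -> \sum_(x <- Y) (pp (ip y x ^+ 2)) ^+ 2 = cP * b.
Proof.
move=> yY.
transitivity (\sum_(x <- Y) (z8 n (ip y x) + fC * z4 n (ip y x) + cP)).
  by apply: eq_bigr => x _; rewrite key_id subrK.
rewrite (_ : \sum_(x <- Y) (z8 n (ip y x) + fC * z4 n (ip y x) + cP) =
  \sum_(x <- Y) z8 n (ip y x) + fC * \sum_(x <- Y) z4 n (ip y x) + \sum_(x <- Y) cP);
  last by rewrite mulr_sumr -!big_split.
by rewrite (sum8 sY hD yY) (sum4 sY hD yY) mulr0 !add0r sumcst.
Qed.

Lemma offp y x : y \in Y -> x \in Y -> x != y -> pp (ip y x ^+ 2) = 0.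
Proof.
move=> yY xY xy.
have h := sumpp yY.
rewrite (bigD1_seq y yY uY) /= (ip_diag sY yY) expr1n -tight in h.
have h0 : \sum_(x <- Y | x != y) (pp (ip y x ^+ 2)) ^+ 2 = 0.
  by apply: (addrI (pp 1 ^+ 2)); rewrite addr0.
have := @psumr_eq0 R _ Y (fun x => x != y) (fun x => (pp (ip y x ^+ 2)) ^+ 2)
   (fun i _ => sqr_ge0 _).
rewrite h0 eqxx => /esym/allP/(_ x xY); rewrite xy /= => /eqP.
by move/eqP; rewrite expf_eq0 /= => /eqP.
Qed.


Definition uu (y x : 'rV[R]_n) : R := 2 * ip y x ^+ 2 - e1.
Definition disc : R := e1 ^+ 2 - 4 * e2.
Definition MM : R := (e1 + c41 R n) * e1 / 2 + c40 R n - e2.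

Lemma offz4 y x : y \in Y -> x \in Y -> x != y ->
  z4 n (ip y x) = (e1 + c41 R n) / 2 * uu y x + MM.
Proof.
move=> yY xY xy; have h := offp yY xY xy; rewrite /pp in h.
have h4 : ip y x ^+ 4 = e1 * ip y x ^+ 2 - e2.
  by rewrite (_ : 4%N = (2 * 2)%N) // exprM; apply/eqP; rewrite -subr_eq0 -h; apply/eqP; ring.
rewrite /z4 h4 /uu /MM; field; lra.
Qed.

Lemma offu2 y x : y \in Y -> x \in Y -> x != y -> uu y x ^+ 2 = disc.
Proof.
move=> yY xY xy; have h := offp yY xY xy; rewrite /pp in h.
rewrite /uu /disc; apply/eqP; rewrite -subr_eq0; apply/eqP.
rewrite (_ : _ - _ = 4 * ((ip y x ^+ 2) ^+ 2 - e1 * ip y x ^+ 2 + e2)); last by ring.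
by rewrite h mulr0.
Qed.

Lemma rowsum y : y \in Y ->
  z4 n 1 + (e1 + c41 R n) / 2 * \sum_(x <- Y | x != y) uu y x + MM * (b - 1) = 0.
Proof.
move=> yY; have h := sum4 sY hD yY.
rewrite (bigD1_seq y yY uY) /= (ip_diag sY yY) in h.
apply: (etrans _ h); rewrite -addrA; congr (_ + _).
rewrite (_ : \sum_(x <- Y | x != y) z4 n (ip y x) =
   \sum_(x <- Y | x != y) ((e1 + c41 R n) / 2 * uu y x + MM)); last first.
  rewrite big_seq_cond [RHS]big_seq_cond; apply: eq_bigr => x /andP [xY xy].
  exact: offz4.
rewrite [RHS]big_split /= -mulr_sumr; congr (_ + _).
have := sumcst Y MM; rewrite (bigD1_seq y yY uY) /= -/b => h2.
by rewrite mulrBr mulr1 -h2 addrC addrK.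
Qed.


Definition SU : R := \sum_(y <- Y) \sum_(x <- Y | x != y) uu y x.

Lemma total : b * z4 n 1 + (e1 + c41 R n) / 2 * SU + MM * (b - 1) * b = 0.
Proof.
have : \sum_(y <- Y) (z4 n 1 + (e1 + c41 R n) / 2 * \sum_(x <- Y | x != y) uu y x
   + MM * (b - 1)) = 0.
  by rewrite big_seq big1 // => y yY; exact: rowsum.
rewrite !big_split /= !sumcst -mulr_sumr -/b -/SU => <-; rewrite /z4; ring.
Qed.

Definition sg (y x : 'rV[R]_n) : int := if 0 <= uu y x then 1 else -1.
Definition KK : int := \sum_(y <- Y) \sum_(x <- Y | x != y) sg y x.

Lemma disc_eq : disc = 112 * (nR + 5) / ((nR + 8) * (nR + 12) ^+ 2).
Proof. rewrite /disc /e1 /e2; have := nR3 => h3; field; lra. Qed.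

Lemma disc_ge0 : 0 <= disc.
Proof.
rewrite disc_eq; have := nR3 => h3.
apply: divr_ge0; first by apply: mulr_ge0; lra.
by apply: mulr_ge0; [lra | apply: exprn_ge0; lra].
Qed.

Lemma uu_sg y x : y \in Y -> x \in Y -> x != y ->
  uu y x = Num.sqrt disc * (sg y x)%:~R.
Proof.
move=> yY xY xy; rewrite -(offu2 yY xY xy) sqrtr_sqr /sg.
case: ifP => h.
  by rewrite ger0_norm // mulr1.
by rewrite ltr0_norm ?ltNge ?h // mulrN1 opprK.
Qed.

Lemma SU_K : SU = Num.sqrt disc * KK%:~R.
Proof.
rewrite /KK rmorph_sum /= mulr_sumr /SU big_seq [RHS]big_seq; apply: eq_bigr => y yY.
rewrite rmorph_sum /= mulr_sumr big_seq_cond [RHS]big_seq_cond; apply: eq_bigr => x /andP [xY xy].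
exact: uu_sg.
Qed.


Definition XX : R := b * z4 n 1 + MM * (b - 1) * b.

Lemma ec_eq : e1 + c41 R n = 8 * (nR - 2) / ((nR + 12) * (nR + 4)).
Proof. rewrite /e1 /c41 -/nR; have := nR3 => h3; field; lra. Qed.

Lemma ec_neq0 : e1 + c41 R n != 0.
Proof.
rewrite ec_eq; have := nR3 => h3.
by rewrite gt_eqF // divr_gt0 // ?mulr_gt0 //; lra.
Qed.

Lemma hSU : (e1 + c41 R n) * SU = -2 * XX.
Proof.
apply/eqP; rewrite -subr_eq0.
rewrite (_ : _ - _ = 2 * (b * z4 n 1 + (e1 + c41 R n) / 2 * SU + MM * (b - 1) * b)).
  by rewrite total mulr0.
by rewrite /XX; field.
Qed.

Lemma hK2 : (e1 + c41 R n) ^+ 2 * disc * (KK%:~R) ^+ 2 = 4 * XX ^+ 2.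
Proof.
have := hSU; rewrite SU_K => h.
rewrite -(sqr_sqrtr disc_ge0) (_ : 4 * XX ^+ 2 = (-2 * XX) ^+ 2); last by ring.
by rewrite -h; ring.
Qed.

Lemma final_R : (2 ^+ 7 * 3 ^+ 4 * 7 ^+ 3 * (nR - 2) * (KK%:~R)) ^+ 2 =
  ((nR + 1) * (nR + 2) * (nR + 5) * (nR + 6) * (nR - 1) *
   (19 * nR ^+ 3 + 83 * nR ^+ 2 - 56 * nR + 1392)) ^+ 2 * (7 * (nR + 5) * (nR + 8)).
Proof.
have hd : disc != 0.
  rewrite disc_eq; have := nR3 => h3.
  by rewrite gt_eqF // divr_gt0 // ?mulr_gt0 // ?exprn_gt0 //; lra.
have hk : (KK%:~R : R) ^+ 2 = 4 * XX ^+ 2 / ((e1 + c41 R n) ^+ 2 * disc).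
  by rewrite -hK2; field; rewrite hd ec_neq0.
rewrite (_ : forall z : R, (2 ^+ 7 * 3 ^+ 4 * 7 ^+ 3 * (nR - 2) * z) ^+ 2 =
   (2 ^+ 7 * 3 ^+ 4 * 7 ^+ 3 * (nR - 2)) ^+ 2 * z ^+ 2); last by move=> z; ring.
rewrite hk /XX hb disc_eq ec_eq /MM /z4 /e1 /e2 /c40 /c41 -/nR.
have := nR3 => h3; field; lra.
Qed.

End Main2.

Definition Pn (d : nat) : nat :=
  ((d+3)*(d+4)*(d+7)*(d+8)*(d+1)*(19*d^3+197*d^2+504*d+1764))%N.

Lemma NTnat (d k : nat) : (0 < d)%N ->
  ((2^7*3^4*7^3 * d * k)^2 = (Pn d)^2 * (7*(d+7)*(d+10)))%N -> False.
Proof.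
move=> d0 H.
have P0 : (0 < Pn d)%N by rewrite /Pn !muln_gt0 !addn_gt0 !orbT.
have hdiv : (Pn d %| 2^7*3^4*7^3 * d * k)%N.
  by rewrite -(dvdn_pexp2r _ _ (isT : (0 < 2)%N)) H dvdn_mulr.
set X := (2^7*3^4*7^3 * d * k)%N in H hdiv.
set m := (X %/ Pn d)%N.
have hX : X = (m * Pn d)%N by rewrite divnK.
have hm : (m ^ 2 = 7*(d+7)*(d+10))%N.
  apply/eqP; rewrite -(eqn_pmul2r (_ : 0 < Pn d ^ 2)%N) ?expn_gt0 ?P0 //.
  by rewrite -expnMn -hX H mulnC.
apply: (@NT.NTz (Z.of_nat d) (Z.of_nat m) (Z.of_nat k)).
- lia.
- lia.
- zify; nia.
- move: hX; rewrite /X /NT.Pz /Pn; zify; lia.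
Qed.


Lemma eq3 (R : realType) (A B C D : R) : A = C -> C = D -> D = B -> A = B.
Proof. by move=> -> -> ->. Qed.

Theorem theorem6p5 (R : realType) (n : nat) : (2 <= n)%N ->
  ~ exists Y : seq 'rV[R]_n,
      harmonic_index_design (pred2 8%N 4%N) Y /\
      (size Y)%:R = ((n + 1) * (n + 2) * (n + 5) * (n + 6))%:R / 252 :> R.
Proof.
move=> hn [Y [[uY [sY hD]] hsz]].
have hb : (size Y)%:R = ((n%:R : R) + 1) * (n%:R + 2) * (n%:R + 5) * (n%:R + 6) / 252.
  by rewrite hsz !natrM !natrD.
have [hn2|hn3] : n = 2%N \/ (3 <= n)%N by lia.
  subst n; move: hsz; set s := size Y => hsz.
  have : (s * 252)%N = 672%N.
    apply/eqP; rewrite -(eqr_nat R) natrM hsz divfK //.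
    by rewrite pnatr_eq0.
  lia.
have HR := final_R uY sY hD hn3 hb.
set d := (n - 2)%N.
have hnd : n = (d + 2)%N by rewrite /d subnK // ltnW.
have hnR : (n%:R : R) = d%:R + 2 by rewrite hnd natrD.
rewrite hnR in HR.
set k := `|KK Y|%N.
apply: (@NTnat d k); first by rewrite /d; lia.
apply/eqP; rewrite -(eqr_nat R); apply/eqP.
have E1 : (((2^7*3^4*7^3 * d * k)^2)%N%:R : R) = (2^+7*3^+4*7^+3 * d%:R)^+2 * (k%:R)^+2.
  by ring.
have E3 : (k%:R : R) ^+ 2 = ((KK Y)%:~R) ^+ 2 by rewrite /k natr_absz intr_norm real_normK // num_real.
rewrite E1 E3 /Pn.
apply: (eq3 _ HR); ring.
Qed.
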